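(* Let $G$ be a group and $N$ a fully invariant subgroup of $G$ (i.e. $\phi(N)\subseteq N$ for all $\phi\in\mathrm{End}(G)$; in particular $N$ is normal). For each $\phi\in\mathrm{End}(G)$ and each $\phi$-cellular automaton $\mathcal{T}:A^G\to A^G$, let $\widehat{\mathcal{T}}:A^{G/N}\to A^{G/N}$ be the unique $\hat\phi$-cellular automaton with $\rho^*\circ\widehat{\mathcal{T}}=\mathcal{T}\circ\rho^*$, where $\hat\phi(gN):=\phi(g)N$. Then the map $\mathcal{T}\mapsto\widehat{\mathcal{T}}$ from $\mathrm{GCA}(A^G)$ to $\mathrm{GCA}(A^{G/N})$ is a monoid homomorphism.
   Context: $A$ is a finite set with $|A|\ge 2$. $A^G$ is the set of functions $G\to A$ with shift action $(g\cdot x)(k):=x(g^{-1}k)$. For $\phi\in\mathrm{End}(G)$, a $\phi$-cellular automaton is a map $\mathcal{T}:A^G\to A^G$ for which there exist finite $T\subseteq G$ and $\mu:A^T\to A$ with $\mathcal{T}(x)(h)=\mu((\phi(h^{-1})\cdot x)|_T)$ for all $x,h$. $\mathrm{GCA}(A^G)$ is the monoid (under composition) of all $\phi$-cellular automata $A^G\to A^G$ over all $\phi\in\mathrm{End}(G)$. $\rho:G\to G/N$ is the canonical projection and $\rho^*:A^{G/N}\to A^G$, $\rho^*(x):=x\circ\rho$. *)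

(* Defs.v *)
From mathcomp Require Import all_boot.
From Stdlib Require Import List.

Set Implicit Arguments.
Unset Strict Implicit.
Unset Printing Implicit Defensive.

Record group := Group {
  gcar :> Type;
  gmul : gcar -> gcar -> gcar;
  gone : gcar;
  ginv : gcar -> gcar;
  gmulA : forall a b c, gmul a (gmul b c) = gmul (gmul a b) c;
  gmul1 : forall a, gmul gone a = a;
  gmulV : forall a, gmul (ginv a) a = gone
}.

Arguments gmul {g}.
Arguments gone {g}.
Arguments ginv {g}.

Definition is_hom (G H : group) (f : G -> H) : Prop :=
  forall a b : G, f (gmul a b) = gmul (f a) (f b).

Definition is_endo (G : group) (phi : G -> G) : Prop := is_hom phi.

Definition is_subgroup (G : group) (N : G -> Prop) : Prop :=
  N gone /\ (forall a b, N a -> N b -> N (gmul a b)) /\ (forall a, N a -> N (ginv a)).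

Definition fully_invariant (G : group) (N : G -> Prop) : Prop :=
  forall phi : G -> G, is_endo phi -> forall g, N g -> N (phi g).

(* rho : G -> Q is (a model of) the canonical projection G -> G/N:
   a surjective homomorphism with kernel exactly N. *)
Definition is_quotient_map (G Q : group) (N : G -> Prop) (rho : G -> Q) : Prop :=
  is_hom rho /\ (forall q : Q, exists g : G, rho g = q) /\
  (forall g : G, rho g = gone <-> N g).

Definition shift (G : group) (A : Type) (g : G) (x : G -> A) : G -> A :=
  fun k => x (gmul (ginv g) k).

Definition is_phiCA (G : group) (A : Type) (phi : G -> G)
  (T : (G -> A) -> (G -> A)) : Prop :=
  exists (S : list G) (mu : ({k : G | In k S} -> A) -> A),
    forall (x : G -> A) (h : G),
      T x h = mu (fun k => shift (phi (ginv h)) x (proj1_sig k)).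

Definition is_GCA (G : group) (A : Type) (T : (G -> A) -> (G -> A)) : Prop :=
  exists phi : G -> G, is_endo phi /\ is_phiCA phi T.

Definition pullback (G Q : group) (A : Type) (rho : G -> Q) (x : Q -> A) : G -> A :=
  fun g => x (rho g).

Definition is_hat (G Q : group) (A : Type) (rho : G -> Q)
  (T : (G -> A) -> (G -> A)) (S : (Q -> A) -> (Q -> A)) : Prop :=
  is_GCA S /\ forall x : Q -> A, pullback rho (S x) = T (pullback rho x).

(* Main.v *)
Require Import Defs.
From mathcomp Require Import all_boot.
From Stdlib Require Import List.
From Stdlib Require Import FunctionalExtensionality ClassicalEpsilon.

Lemma g_mulVr (G : group) (a : G) : gmul a (ginv a) = gone.
Proof.
transitivity (gmul (gmul (ginv (ginv a)) (ginv a)) (gmul a (ginv a))).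
  by rewrite gmulV gmul1.
by rewrite -gmulA (gmulA (ginv a) a) gmulV gmul1 gmulV.
Qed.

Lemma g_mul1r (G : group) (a : G) : gmul a gone = a.
Proof. by rewrite -(gmulV a) gmulA g_mulVr gmul1. Qed.

Lemma g_invU (G : group) (a b : G) : gmul a b = gone -> b = ginv a.
Proof.
move=> H. by rewrite -(gmul1 b) -(gmulV a) -gmulA H g_mul1r.
Qed.

Lemma g_invK (G : group) (a : G) : ginv (ginv a) = a.
Proof. by symmetry; apply: g_invU; rewrite gmulV. Qed.

Lemma hom1 (G H : group) (f : G -> H) : is_hom f -> f gone = gone.
Proof.
move=> hf. have E : f gone = gmul (f gone) (f gone) by rewrite -hf gmul1.
transitivity (gmul (ginv (f gone)) (gmul (f gone) (f gone))).
  by rewrite gmulA gmulV gmul1.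
by rewrite -E gmulV.
Qed.

Lemma homV (G H : group) (f : G -> H) : is_hom f -> forall a, f (ginv a) = ginv (f a).
Proof.
move=> hf a. apply: g_invU. by rewrite -hf g_mulVr hom1.
Qed.

Arguments g_mulVr {G}.
Arguments g_mul1r {G}.
Arguments g_invU {G}.
Arguments g_invK {G}.
Arguments hom1 {G H f}.
Arguments homV {G H f}.

Lemma phiCA_endo (G : group) (A : Type) (phi : G -> G) (T : (G -> A) -> G -> A) :
  is_endo phi -> is_phiCA phi T ->
  exists (S : list G) (mu : ({k : G | In k S} -> A) -> A),
    forall x h, T x h = mu (fun k => x (gmul (phi h) (proj1_sig k))).
Proof.
move=> he [S [mu HT]]. exists S, mu => x h. rewrite HT /shift.
by rewrite (homV he) g_invK.
Qed.

Lemma endo_phiCA (G : group) (A : Type) (phi : G -> G) (T : (G -> A) -> G -> A)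
  (S : list G) (mu : ({k : G | In k S} -> A) -> A) :
  is_endo phi -> (forall x h, T x h = mu (fun k => x (gmul (phi h) (proj1_sig k)))) ->
  is_phiCA phi T.
Proof.
move=> he HT. exists S, mu => x h. rewrite HT /shift.
by rewrite (homV he) g_invK.
Qed.

Arguments phiCA_endo {G A phi T}.
Arguments endo_phiCA {G A phi T}.

Lemma comp_GCA (G : group) (A : Type) (T1 T2 : (G -> A) -> G -> A) :
  is_GCA T1 -> is_GCA T2 -> is_GCA (fun x => T1 (T2 x)).
Proof.
move=> [p1 [e1 C1]] [p2 [e2 C2]].
have [L1 [m1 H1]] := phiCA_endo e1 C1.
have [L2 [m2 H2]] := phiCA_endo e2 C2.
have e : is_endo (fun g => p2 (p1 g)).
  by move=> a b /=; rewrite e1 e2.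
exists (fun g => p2 (p1 g)); split => //.
pose L := flat_map (fun a => map (fun b => gmul (p2 a) b) L2) L1.
have mem : forall (k1 : {k | In k L1}) (k2 : {k | In k L2}),
    In (gmul (p2 (proj1_sig k1)) (proj1_sig k2)) L.
  move=> [k1 i1] [k2 i2] /=. apply/in_flat_map. exists k1; split => //.
  by apply: (in_map (fun b => gmul (p2 k1) b)).
apply: (@endo_phiCA G A (fun g => p2 (p1 g)) (fun x => T1 (T2 x)) L
  (fun f : {k | In k L} -> A => m1 (fun k1 => m2 (fun k2 => f (exist (fun k => In k L) _ (mem k1 k2)))))) => //.
move=> x h /=. rewrite H1. f_equal. apply: functional_extensionality => k1.
rewrite H2 /=. f_equal. apply: functional_extensionality => k2 /=.
by rewrite e2 gmulA.
Qed.

Lemma id_GCA (G : group) (A : Type) : is_GCA (fun x : G -> A => x).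
Proof.
exists id; split; first by [].
have i0 : In (@gone G) [:: gone] by left.
apply: (@endo_phiCA _ _ _ _ [:: gone] (fun f : {k | In k [:: @gone G]} -> A => f (exist (fun k => In k [:: @gone G]) _ i0))) => //.
by move=> x h /=; rewrite g_mul1r.
Qed.

Arguments comp_GCA {G A T1 T2}.

Theorem corollary4p4 (G : group) (A : finType) (hA : 1 < #|A|)
  (N : G -> Prop) (hN : is_subgroup N) (hfi : fully_invariant N)
  (Q : group) (rho : G -> Q) (hrho : is_quotient_map N rho) :
  (* well-definedness: for every phi-CA T, hat phi exists, and for it there is
     a unique hat-phi-CA S with rho^* o S = T o rho^* *)
  (forall (phi : G -> G) (T : (G -> A) -> (G -> A)),
      is_endo phi -> is_phiCA phi T ->
      (exists psi : Q -> Q, is_endo psi /\ forall g, psi (rho g) = rho (phi g)) /\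
      (forall psi : Q -> Q, is_endo psi -> (forall g, psi (rho g) = rho (phi g)) ->
        exists! S : (Q -> A) -> (Q -> A),
          is_phiCA psi S /\ forall x, pullback rho (S x) = T (pullback rho x))) /\
  (* compatibility with composition *)
  (forall (T1 T2 : (G -> A) -> (G -> A)) (S1 S2 : (Q -> A) -> (Q -> A)),
      is_GCA T1 -> is_GCA T2 -> is_hat rho T1 S1 -> is_hat rho T2 S2 ->
      is_hat rho (fun x => T1 (T2 x)) (fun x => S1 (S2 x))) /\
  (* compatibility with the identity *)
  is_hat rho (fun x : G -> A => x) (fun x : Q -> A => x).
Proof.
have [rh [rsurj rker]] := hrho.
split; last split.
- move=> phi T he HT.
  have wd : forall a b, rho a = rho b -> rho (phi a) = rho (phi b).
    move=> a b E.
    have Nab : N (gmul (ginv a) b).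
      by apply/rker; rewrite rh (homV rh) E gmulV.
    have := hfi phi he _ Nab => /rker.
    rewrite he (homV he) rh (homV rh) => /g_invU ->.
    by rewrite g_invK.
  split.
  + pose sec q := proj1_sig (constructive_indefinite_description _ (rsurj q)).
    have secP : forall q, rho (sec q) = q.
      by move=> q; rewrite /sec; case: constructive_indefinite_description.
    have psiP : forall g, rho (phi (sec (rho g))) = rho (phi g).
      by move=> g; apply: wd; rewrite secP.
    exists (fun q => rho (phi (sec q))); split => //.
    move=> a b. have [ga <-] := rsurj a. have [gb <-] := rsurj b.
    by rewrite -rh !psiP he rh.
  + move=> psi hpsi Hpsi.
    have [L [mu HL]] := phiCA_endo he HT.
    pose Sy := fun (y : Q -> A) (q : Q) => mu (fun k => y (gmul (psi q) (rho (proj1_sig k)))).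
    have pb : forall y, pullback rho (Sy y) = T (pullback rho y).
      move=> y. apply: functional_extensionality => g.
      rewrite /pullback /Sy HL Hpsi. f_equal. apply: functional_extensionality => k.
      by rewrite rh.
    exists Sy; split; first split => //.
    * have mem : forall k : {k | In k L}, In (rho (proj1_sig k)) (map rho L).
        by move=> [k i]; apply: in_map.
      apply: (@endo_phiCA _ _ _ _ (map rho L)
        (fun f : {k' | In k' (map rho L)} -> A => mu (fun k => f (exist (fun k' => In k' (map rho L)) _ (mem k))))) => //.
    * move=> S' [_ HS']. apply: functional_extensionality => y.
      apply: functional_extensionality => q. have [g <-] := rsurj q.
      have := f_equal (fun f => f g) (HS' y). have := f_equal (fun f => f g) (pb y).
      rewrite /pullback => -> -> //.
- move=> T1 T2 S1 S2 _ _ [G1 P1] [G2 P2]; split; first exact: comp_GCA.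
  by move=> x; rewrite P1 P2.
- split; [exact: id_GCA | by []].
Qed.
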